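(* Let $p$ be a prime, let $e\geq2$ and $d\geq2$ be integers, and let $\mathcal P(p^e,d)\subset\mathbb R^d$ be the convex hull of all $d$-dimensional vector-factorisations of $p^e$ (its vertices are exactly these vector-factorisations $(p^{\beta_1},\dots,p^{\beta_d})$ with $\beta\in\mathbb N^d$, $\sum_i\beta_i=e$). Let $S$ be a non-empty set of vertices of $\mathcal P(p^e,d)$, and define $m(S)=(m_1,\dots,m_d)$ and $M(S)=(M_1,\dots,M_d)$ by $m_i=\min_{(p^{\beta_1},\dots,p^{\beta_d})\in S}\beta_i$ and $M_i=\max_{(p^{\beta_1},\dots,p^{\beta_d})\in S}\beta_i$. If $M(S)-m(S)\in\{0,1\}^d$, then $S$ is contained in the set of vertices of a regular facet of $\mathcal P(p^e,d)$.
   Context: $\mathbb N=\{0,1,2,\dots\}$. A $d$-dimensional vector-factorisation of $N\geq1$ is a vector $(v_1,\dots,v_d)\in\mathbb N^d$ with $v_1\cdots v_d=N$. For $\lambda\in\{1,\dots,\min(e,d-1)\}$, $\mathcal R_\lambda(d,e)$ is the set of all $\alpha\in\mathbb N^d$ with $\min(\alpha_1,\dots,\alpha_d)=0$, $\max(\alpha_1,\dots,\alpha_d)\,d<e+\sum_i\alpha_i$ and $e+\sum_i\alpha_i\equiv\lambda\pmod d$; for such $\alpha$, $\mu(\alpha)$ is the integer with $\mu(\alpha)d+\lambda=e+\sum_i\alpha_i$. A regular facet of $\mathcal P(p^e,d)$ is a facet of the form $F_\alpha=\{x\in\mathcal P(p^e,d):\sum_{i=1}^dp^{\alpha_i}x_i=\lambda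 p^{\mu(\alpha)+1}+(d-\lambda)p^{\mu(\alpha)}\}$ for some $\lambda\in\{1,\dots,\min(e,d-1)\}$ and $\alpha\in\mathcal R_\lambda(d,e)$; equivalently, the convex hull of $\{(p^{\mu-\alpha_1+\epsilon_1},\dots,p^{\mu-\alpha_d+\epsilon_d}):\epsilon\in\{0,1\}^d,\sum_i\epsilon_i=\lambda\}$ with $\mu=\mu(\alpha)$. *)

(* Defs.v *)
From mathcomp Require Import all_boot.
Set Implicit Arguments. Unset Strict Implicit. Unset Printing Implicit Defensive.

(* Vertices of P(p^e,d) are the points (p^b_1,...,p^b_d) with b : 'I_d -> nat
   and \sum_i b_i = e; we represent a vertex by its exponent vector b. *)
Definition is_vertex_exp (d e : nat) (b : {ffun 'I_d -> nat}) : Prop :=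
  \sum_(i < d) b i = e.

(* M(S)_i and m(S)_i for a non-empty list S of exponent vectors.
   (The seed of the min is M(S)_i, which is neutral for min on S.) *)
Definition MaxS (d : nat) (S : seq {ffun 'I_d -> nat}) (i : 'I_d) : nat :=
  \max_(b <- S) b i.
Definition MinS (d : nat) (S : seq {ffun 'I_d -> nat}) (i : 'I_d) : nat :=
  \big[minn/MaxS S i]_(b <- S) b i.

Definition in_R (d e lam : nat) (alpha : 'I_d -> nat) : Prop :=
  (exists i : 'I_d, alpha i = 0) /\
  (forall i : 'I_d, alpha i * d < e + \sum_(j < d) alpha j) /\
  (e + \sum_(j < d) alpha j = lam %[mod d]).

(* mu(alpha): the integer with mu * d + lambda = e + \sum alpha *)
Definition mu (d e lam : nat) (alpha : 'I_d -> nat) : nat :=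
  (e + \sum_(j < d) alpha j - lam) %/ d.

(* b is (the exponent vector of) a vertex of the regular facet F_alpha, i.e.
   (p^b_i)_i = (p^(mu - alpha_i + eps_i))_i for some eps in {0,1}^d with
   \sum eps = lambda; written additively as b_i + alpha_i = mu + eps_i. *)
Definition vertex_of_regular_facet (d e lam : nat) (alpha : 'I_d -> nat)
    (b : {ffun 'I_d -> nat}) : Prop :=
  exists eps : 'I_d -> bool,
    \sum_(i < d) (eps i : nat) = lam /\
    forall i : 'I_d, b i + alpha i = mu e lam alpha + eps i.

(* Main.v *)
Require Import Defs.
From mathcomp Require Import all_boot.
From mathcomp Require Import zify.

Lemma bigmin_le (d : nat) (S : seq {ffun 'I_d -> nat}) (i : 'I_d) x b :
  b \in S -> \big[minn/x]_(c <- S) c i <= b i.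
Proof.
elim: S => [|a S IH] //=; rewrite in_cons big_cons => /orP [/eqP -> | H].
  exact: geq_minl.
exact: leq_trans (geq_minr _ _) (IH H).
Qed.

Lemma key (e d : nat) (S : seq {ffun 'I_d -> nat}) (f : 'I_d -> nat) t :
  1 <= t -> t <= d.-1 -> \sum_(i < d) f i + t = e ->
  (forall b i, b \in S -> f i <= b i <= (f i).+1) ->
  (forall b, b \in S -> is_vertex_exp e b) ->
  exists lam : nat, exists alpha : 'I_d -> nat,
    [/\ 1 <= lam, lam <= minn e d.-1, in_R e lam alpha &
        forall b, b \in S -> vertex_of_regular_facet e lam alpha b].
Proof.
move=> t1 td he hs hv.
have d0 : 0 < #|'I_d| by rewrite card_ord; lia.
set c := \max_(i < d) f i.
have fc : forall i, f i <= c by move=> i; exact: leq_bigmax.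
have sA : \sum_(i < d) (c - f i) + \sum_(i < d) f i = d * c.
  rewrite -big_split /= (eq_bigr (fun=> c)); last by move=> i _; rewrite subnK.
  by rewrite sum_nat_const card_ord.
have emod : e + \sum_(j < d) (c - f j) = d * c + t by lia.
have hmu : mu e t (fun i => c - f i) = c.
  rewrite /mu emod addnK mulKn //; by rewrite card_ord in d0.
exists t, (fun i => c - f i); split => //.
- rewrite leq_min td andbT; lia.
- split; last split.
  + have [i0 Hi0] := eq_bigmax f d0; exists i0; rewrite -/c in Hi0; lia.
  + move=> i; rewrite emod; have := fc i; nia.
  + by rewrite emod mulnC modnMDl.
- move=> b Hb; exists (fun i => f i < b i); split.
    have hv' := hv b Hb; rewrite /is_vertex_exp in hv'.
    have : \sum_(i < d) b i = \sum_(i < d) f i + \sum_(i < d) (f i < b i : nat).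
      rewrite -big_split; apply: eq_bigr => i _ /=.
      have := hs b i Hb; case: ltnP => /=; lia.
    by rewrite hv' -he => /eqP; rewrite eqn_add2l => /eqP ->.
  move=> i; rewrite hmu; have := hs b i Hb; have := fc i; case: ltnP => /=; lia.
Qed.

Theorem lemma5p2 (p e d : nat) (S : seq {ffun 'I_d -> nat}) :
  prime p -> 2 <= e -> 2 <= d ->
  S != [::] ->
  (forall b, b \in S -> is_vertex_exp e b) ->
  (forall i : 'I_d, MaxS S i - MinS S i <= 1) ->
  exists lam : nat, exists alpha : 'I_d -> nat,
    [/\ 1 <= lam, lam <= minn e d.-1, in_R e lam alpha &
        forall b, b \in S -> vertex_of_regular_facet e lam alpha b].
Proof.
move=> _ e2 d2 SN hv hM.
case: S SN hv hM => [|b0 S'] // _; set S := b0 :: S' => hv hM.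
have b0S : b0 \in S by rewrite in_cons eqxx.
case: (boolP (all (pred1 b0) S)) => [/allP Hall | /allP Hn].
-
  have hv0 := hv b0 b0S; rewrite /is_vertex_exp in hv0.
  have [j Hj] : exists j : 'I_d, 0 < b0 j.
    case: (boolP [exists j, 0 < b0 j]) => [/existsP //|/existsPn Hz].
    exfalso; move: hv0; rewrite big1 => [|i _]; last by have := Hz i; case: (b0 i).
    lia.
  apply: (@key e d S (fun i => if i == j then (b0 i).-1 else b0 i) 1) => //.
  + lia.
  + rewrite (bigD1 j) //= eqxx; rewrite (bigD1 j) //= in hv0.
    rewrite (eq_bigr (fun i => b0 i)) => [|i /negbTE -> //]; by rewrite -hv0 addnAC addn1 prednK.
  + move=> b i /Hall /eqP ->; case: eqP => [->|] /=; lia.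
-
  have [b1 b1S nb] : exists2 b1, b1 \in S & b1 != b0.
    case: (boolP (has (predC1 b0) S)) => [/hasP [b1 b1S nb]|/hasPn H].
      by exists b1.
    by exfalso; apply: Hn => x xS; have := H x xS; rewrite /= negbK.
  have hs : forall b i, b \in S -> MinS S i <= b i <= (MinS S i).+1.
    move=> b i bS; rewrite bigmin_le //=.
    have := leq_bigmax_seq (P := xpredT) (F := fun c : {ffun 'I_d -> nat} => c i) b bS isT.
    rewrite -/(MaxS S i); have := hM i; lia.
  have [i Hi] : exists i, b1 i != b0 i.
    case: (boolP [exists x, b1 x != b0 x]) => [/existsP //|/existsPn H].
    exfalso; move: nb; rewrite /= => /negP; apply; apply/eqP/ffunP => x; have := H x; by rewrite negbK => /eqP.
  have sumsplit : forall b, b \in S ->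
     \sum_(k < d) b k = \sum_(k < d) MinS S k + \sum_(k < d) (MinS S k < b k : nat).
    move=> b bS; rewrite -big_split; apply: eq_bigr => k _ /=.
    have := hs b k bS; case: ltnP => /=; lia.
  have cnt : forall b, b \in S -> \sum_(k < d) (MinS S k < b k : nat) =
      (MinS S i < b i) + \sum_(k < d | k != i) (MinS S k < b k : nat).
    by move=> b bS; rewrite (bigD1 i).
  have bnd : forall b, \sum_(k < d | k != i) (MinS S k < b k : nat) <= d.-1.
    move=> b; apply: leq_trans (_ : \sum_(k < d | k != i) 1 <= _).
      by apply: leq_sum => k _; case: ltnP.
    rewrite sum1_card cardC1 card_ord //.
  have e0 := hv b0 b0S; have e1 := hv b1 b1S; rewrite /is_vertex_exp in e0 e1.
  have s0 := sumsplit b0 b0S; have s1 := sumsplit b1 b1S.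
  have c0 := cnt b0 b0S; have c1 := cnt b1 b1S.
  have n0 := bnd b0; have n1 := bnd b1.
  have h0 := hs b0 i b0S; have h1 := hs b1 i b1S.
  have Hi2 : (b1 i < b0 i) || (b0 i < b1 i) by rewrite -neq_ltn.
  clear Hi.
  move: c0 c1 s0 s1 n0 n1 e0 e1.
  set T0 := \sum_(k < d) (MinS S k < b0 k : nat).
  set T1 := \sum_(k < d) (MinS S k < b1 k : nat).
  set R0 := \sum_(k < d | k != i) (MinS S k < b0 k : nat).
  set R1 := \sum_(k < d | k != i) (MinS S k < b1 k : nat).
  set sb0 := \sum_(k < d) b0 k.
  set sb1 := \sum_(k < d) b1 k.
  set sm := \sum_(k < d) MinS S k.
  move=> c0 c1 s0 s1 n0 n1 e0 e1.
  have key' := @key e d S (MinS S) T0.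
  move: h0 h1 Hi2 c0 c1.
  set m := MinS S i. set x0 := b0 i. set x1 := b1 i.
  move=> h0 h1 Hi2 c0 c1.
  have ht : 1 <= T0 <= d.-1.
    move: c0 c1; case: (ltnP (MinS S i) (b0 i)); case: (ltnP (MinS S i) (b1 i)) => ? ? c0 c1; rewrite /= in c0 c1; case/orP: Hi2 => ?; lia.
  apply: key' => //; lia.
Qed.
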